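(* Let $\alpha,\beta,r:\mathbb{Z}\to\mathbb{R}$ with $\beta(t)\neq0$ for all $t\in\mathbb{Z}$, and fix $a\in\mathbb{Z}$. Let $y_1,y_2$ satisfy $y_i(t+2)+\alpha(t)y_i(t+1)+\beta(t)y_i(t)=0$ ($i=1,2$) with $W(t):=y_1(t)y_2(t+1)-y_2(t)y_1(t+1)\neq0$. Then the general solution of $$y(t+2)+\alpha(t)y(t+1)+\beta(t)y(t)=r(t),\qquad t\in\mathbb{Z},$$ is $$y(t)=c_1y_1(t)+c_2y_2(t)+y_1(t)\sum\frac{\prod_{j=a}^{t-1}\beta(j)\sum\frac{r(t)y_1(t+1)}{\prod_{j=a}^{t}\beta(j)}}{y_1(t)y_1(t+1)}$$ or $$y(t)=c_1y_1(t)+c_2y_2(t)+y_2(t)\sum\frac{\prod_{j=a}^{t-1}\beta(j)\sum\frac{r(t)y_2(t+1)}{\prod_{j=a}^{t}\beta(j)}}{y_2(t)y_2(t+1)},$$ where $c_1,c_2$ are arbitrary constants.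
   Context: $\sum f(t)$ denotes an indefinite sum with respect to $t$, i.e. any function $F$ with $F(t+1)-F(t)=f(t)$. *)

(* Defs.v *)
From mathcomp Require Import all_boot all_order all_algebra.
From mathcomp Require Import reals.
Set Implicit Arguments. Unset Strict Implicit. Unset Printing Implicit Defensive.
Import Order.TTheory GRing.Theory Num.Theory.
Local Open Scope ring_scope.

(* Discrete product  prod_{j=a}^{t-1} beta(j)  for t : int, with the standard
   convention  prod_{j=a}^{t-1} beta(j) = prod_{j=t}^{a-1} beta(j)^{-1}  when t < a
   (so that P(a) = 1 and P(t+1) = beta(t) P(t) for all t). *)
Definition dprod (R : realType) (beta : int -> R) (a t : int) : R :=
  if (a <= t)%R then \prod_(i < `|t - a|%N) beta (a + (i%:Z))
  else \prod_(i < `|a - t|%N) (beta (t + (i%:Z)))^-1.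

Definition is_indef_sum (R : realType) (F f : int -> R) : Prop :=
  forall t : int, F (t + 1) - F t = f t.

Definition solves (R : realType) (alpha beta r y : int -> R) : Prop :=
  forall t : int, y (t + 2) + alpha t * y (t + 1) + beta t * y t = r t.

(* Main.v *)
Require Import Defs.
From mathcomp Require Import all_boot all_order all_algebra.
From mathcomp Require Import reals.
From mathcomp Require Import zify ring lra.
Import Order.TTheory GRing.Theory Num.Theory.
Local Open Scope ring_scope.

Section Aux.
Set Implicit Arguments.
Variable R : realType.

Lemma dprodS (beta : int -> R) (a t : int) (hb : forall t, beta t != 0) :
  dprod beta a (t + 1) = beta t * dprod beta a t.
Proof.
rewrite /dprod.
case: (lerP a t) => hat.
  have -> : (a <= t + 1) = true by apply/idP; lia.
  have -> : `|(t + 1 - a)%R|%N = (`|t - a|%N).+1 by lia.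
  rewrite big_ord_recr /= mulrC; congr (_ * _); congr beta; lia.
case: (lerP a (t + 1)) => hat1.
  have -> : `|(t + 1 - a)%R|%N = 0%N by lia.
  have -> : `|a - t|%N = 1%N by lia.
  rewrite big_ord0 big_ord1 addr0 mulfV //.
have -> : `|a - t|%N = (`|(a - (t + 1))%R|%N).+1 by lia.
rewrite big_ord_recl /= addr0 mulrA mulfV // mul1r.
apply: eq_bigr => i _; congr (_^-1); congr beta.
by rewrite /bump /= PoszD addrA.
Qed.

Lemma dprod_neq0 (beta : int -> R) (a t : int) (hb : forall t, beta t != 0) :
  dprod beta a t != 0.
Proof.
rewrite /dprod; case: ifP => _; apply/prodf_neq0 => i _ //.
by rewrite invr_eq0.
Qed.

Lemma indef_exists (f : int -> R) : exists F, is_indef_sum F f.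
Proof.
exists (fun t => if (0 <= t) then \sum_(i < `|t|%N) f i%:Z
                 else - \sum_(i < `|t|%N) f (t + i%:Z)).
move=> t /=.
case: (lerP 0 t) => ht.
  have -> : (0 <= t + 1) = true by apply/idP; lia.
  have -> : `|(t + 1)%R|%N = (`|t|%N).+1 by lia.
  rewrite big_ord_recr /= addrAC subrr add0r; congr f; lia.
case: (lerP 0 (t + 1)) => ht1.
  have -> : `|(t + 1)%R|%N = 0%N by lia.
  have -> : `|t|%N = 1%N by lia.
  rewrite big_ord0 big_ord1 addr0 opprK add0r //.
have -> : `|t|%N = (`|(t + 1)%R|%N).+1 by lia.
rewrite big_ord_recl /= addr0.
rewrite (eq_bigr (fun i : 'I_ _ => f (t + 1 + i%:Z)) (F1 := fun i : 'I_ _ => f (t + bump 0 i))); last first.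
  by move=> i _; rewrite /bump /= PoszD addrA.
by rewrite opprK addrC addrK.
Qed.

Lemma hom_zero (alpha beta d : int -> R) (hb : forall t, beta t != 0) :
  solves alpha beta (fun _ => 0) d -> d 0 = 0 -> d 1 = 0 -> forall t, d t = 0.
Proof.
move=> hs h0 h1.
have Hp : forall n : nat, d n%:Z = 0 /\ d (n%:Z + 1) = 0.
  elim=> [|n [IH1 IH2]]; first by split.
  split; first by rewrite -IH2; congr d; lia.
  have := hs n%:Z; rewrite IH1 IH2 mulr0 addr0 mulr0 addr0.
  by move=> <-; congr d; lia.
have Hn : forall n : nat, d (- n%:Z) = 0 /\ d (- n%:Z + 1) = 0.
  elim=> [|n [IH1 IH2]]; first by split.
  split; last by rewrite -IH1; congr d; lia.
  have := hs (- n.+1%:Z).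
  have -> : - n.+1%:Z + 2 = - n%:Z + 1 by lia.
  have -> : - n.+1%:Z + 1 = - n%:Z by lia.
  rewrite IH1 IH2 mulr0 !add0r => /eqP.
  by rewrite mulf_eq0 (negbTE (hb _)) /= => /eqP.
case=> n; first by case: (Hp n).
by rewrite NegzE; case: (Hn n.+1).
Qed.

Lemma hom_span (alpha beta h y1 y2 : int -> R) (hb : forall t, beta t != 0)
  (hy1 : solves alpha beta (fun _ => 0) y1)
  (hy2 : solves alpha beta (fun _ => 0) y2)
  (hW : y1 0 * y2 1 - y2 0 * y1 1 != 0) :
  solves alpha beta (fun _ => 0) h ->
  exists c1 c2, forall t, h t = c1 * y1 t + c2 * y2 t.
Proof.
move=> hh.
set W := y1 0 * y2 1 - y2 0 * y1 1.
exists ((h 0 * y2 1 - h 1 * y2 0) / W), ((y1 0 * h 1 - y1 1 * h 0) / W).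
set c1 := (h 0 * y2 1 - h 1 * y2 0) / W.
set c2 := (y1 0 * h 1 - y1 1 * h 0) / W.
move=> t; apply/eqP; rewrite -subr_eq0; apply/eqP; move: t.
apply: (@hom_zero alpha beta (fun t => h t - (c1 * y1 t + c2 * y2 t)) hb).
- move=> t /=; have := hh t; have := hy1 t; have := hy2 t.
  move=> e2 e1 e0; rewrite /=.
  rewrite -[RHS](_ : (h (t + 2) + alpha t * h (t + 1) + beta t * h t) -
     c1 * (y1 (t + 2) + alpha t * y1 (t + 1) + beta t * y1 t) -
     c2 * (y2 (t + 2) + alpha t * y2 (t + 1) + beta t * y2 t) = 0).
    ring.
  by rewrite e0 e1 e2; ring.
- rewrite /= /c1 /c2 /W; field; exact: hW.
- rewrite /= /c1 /c2 /W; field; exact: hW.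
Qed.

Lemma part_sol (alpha beta r y1 G F : int -> R) (a : int)
  (hb : forall t, beta t != 0)
  (hy1 : solves alpha beta (fun _ => 0) y1) (hnz : forall t, y1 t != 0)
  (hG : is_indef_sum G (fun t => r t * y1 (t + 1) / dprod beta a (t + 1)))
  (hF : is_indef_sum F (fun t => dprod beta a t * G t / (y1 t * y1 (t + 1)))) :
  solves alpha beta r (fun t => y1 t * F t).
Proof.
move=> t /=.
have e2 : t + 2 = t + 1 + 1 by lia.
have hF1 := hF (t + 1); have hF0 := hF t; have hG0 := hG t.
have hy := hy1 t; rewrite /= e2 in hy.
have hP := dprodS beta a t hb.
have hP0 := dprod_neq0 beta a t hb.
have hnz0 := hnz t; have hnz1 := hnz (t + 1); have hnz2 := hnz (t + 1 + 1).
rewrite e2.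
rewrite hP in hF1 hG0.
move: hF1 hF0 hG0 hy hP0 hnz0 hnz1 hnz2.
set Y0 := y1 t; set Y1 := y1 (t + 1); set Y2 := y1 (t + 1 + 1).
set P0 := dprod beta a t; set G0 := G t; set G1 := G (t + 1).
set F0 := F t; set F1 := F (t + 1); set F2 := F (t + 1 + 1).
move=> hF1 hF0 hG0 hy hP0 hnz0 hnz1 hnz2.
have eF2 : F2 = F1 + beta t * P0 * G1 / (Y1 * Y2).
  by rewrite -hF1; ring.
have eF1 : F1 = F0 + P0 * G0 / (Y0 * Y1) by rewrite -hF0; ring.
have eG1 : G1 = G0 + r t * Y1 / (beta t * P0) by rewrite -hG0; ring.
have eal : alpha t = (- Y2 - beta t * Y0) / Y1.
  apply: (mulIf hnz1); rewrite divfK //.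
  apply/eqP; rewrite -subr_eq0 -hy; apply/eqP; ring.
rewrite eF2 eG1 eF1 eal; field.
by rewrite hP0 hnz0 hnz1 hnz2 (hb t).
Qed.

Lemma main_part (alpha beta r : int -> R) (a : int) (y1 y2 : int -> R)
  (hbeta : forall t, beta t != 0)
  (hy1 : solves alpha beta (fun _ => 0) y1)
  (hy2 : solves alpha beta (fun _ => 0) y2)
  (hW : y1 0 * y2 1 - y2 0 * y1 1 != 0)
  (hnz : forall t, y1 t != 0) (y : int -> R) :
  solves alpha beta r y <->
     exists (c1 c2 : R) (G F : int -> R),
       is_indef_sum G (fun t => r t * y1 (t + 1) / dprod beta a (t + 1)) /\
       is_indef_sum F (fun t => dprod beta a t * G t / (y1 t * y1 (t + 1))) /\
       forall t, y t = c1 * y1 t + c2 * y2 t + y1 t * F t.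
Proof.
split.
  move=> hy.
  have [G hG] := indef_exists (fun t => r t * y1 (t + 1) / dprod beta a (t + 1)).
  have [F hF] := indef_exists (fun t => dprod beta a t * G t / (y1 t * y1 (t + 1))).
  have hp := part_sol _ _ hbeta hy1 hnz hG hF.
  have hh : solves alpha beta (fun _ => 0) (fun t => y t - y1 t * F t).
    move=> t /=; have := hy t; have := hp t; move=> /= e1 e2.
    rewrite -[RHS](subrr (r t)); rewrite -{1}e2 -e1; ring.
  have [c1 [c2 hc]] := hom_span hbeta hy1 hy2 hW hh.
  exists c1, c2, G, F; split=> //; split=> // t.
  by rewrite -hc; ring.
case=> [c1 [c2 [G [F [hG [hF hy]]]]]] t.
have hp := part_sol _ _ hbeta hy1 hnz hG hF t.
have e1 := hy1 t; have e2 := hy2 t.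
rewrite /= in hp e1 e2.
rewrite !hy.
transitivity (c1 * (y1 (t + 2) + alpha t * y1 (t + 1) + beta t * y1 t) +
  c2 * (y2 (t + 2) + alpha t * y2 (t + 1) + beta t * y2 t) +
  (y1 (t + 2) * F (t + 2) + alpha t * (y1 (t + 1) * F (t + 1)) + beta t * (y1 t * F t))).
  ring.
by rewrite e1 e2 hp !mulr0 !add0r.
Qed.

End Aux.

Theorem theorem4p2 (R : realType) (alpha beta r : int -> R) (a : int)
  (y1 y2 : int -> R)
  (hbeta : forall t, beta t != 0)
  (hy1 : solves alpha beta (fun _ => 0) y1)
  (hy2 : solves alpha beta (fun _ => 0) y2)
  (hW : forall t, y1 t * y2 (t + 1) - y2 t * y1 (t + 1) != 0) :
  ((forall t, y1 t != 0) ->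
   forall y : int -> R,
     solves alpha beta r y <->
     exists (c1 c2 : R) (G F : int -> R),
       is_indef_sum G (fun t => r t * y1 (t + 1) / dprod beta a (t + 1)) /\
       is_indef_sum F (fun t => dprod beta a t * G t / (y1 t * y1 (t + 1))) /\
       forall t, y t = c1 * y1 t + c2 * y2 t + y1 t * F t)
  /\
  ((forall t, y2 t != 0) ->
   forall y : int -> R,
     solves alpha beta r y <->
     exists (c1 c2 : R) (G F : int -> R),
       is_indef_sum G (fun t => r t * y2 (t + 1) / dprod beta a (t + 1)) /\
       is_indef_sum F (fun t => dprod beta a t * G t / (y2 t * y2 (t + 1))) /\
       forall t, y t = c1 * y1 t + c2 * y2 t + y2 t * F t).
Proof.
have hW0 := hW 0; rewrite add0r in hW0.
split.
  by move=> hnz y; apply: main_part.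
move=> hnz y.
have hW0' : y2 0 * y1 1 - y1 0 * y2 1 != 0.
  by rewrite -opprB oppr_eq0.
rewrite (@main_part R alpha beta r a y2 y1 hbeta hy2 hy1 hW0' hnz y).
split; case=> [c1 [c2 [G [F [hG [hF hy]]]]]];
  exists c2, c1, G, F; split=> //; split=> // t; rewrite hy; ring.
Qed.
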